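(* Let $G$ be a necklace based on the cycle $C_n$, i.e. $G$ is obtained from $C_n$ by attaching, at each vertex $i$ of $C_n$ ($i=1,\dots,n$), a cycle $C^i$ that meets the rest of the graph only in the vertex $i$. Then $$\mathrm{vol}(G)=\mathrm{vol}(C_n)\prod_{i=1}^n\mathrm{vol}(C^i).$$
   Context: For a finite simple undirected graph $G=(V,E)$ with $V=[n]$, and $S\subseteq[n-1]$, the cut vector $x^S\in\mathbb{R}^{|E|}$ has coordinates $x^S_{ij}=1$ if $|\{i,j\}\cap S|=1$ and $x^S_{ij}=0$ otherwise, for each edge $(i,j)\in E$. The cut polytope is $\mathrm{Cut}(G)=\mathrm{conv}\{x^S: S\subseteq[n-1]\}\subset\mathbb{R}^{|E|}$, and $\mathrm{vol}(G)$ denotes the $|E|$-dimensional Lebesgue volume of $\mathrm{Cut}(G)$. *)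

(* Defs.v *)
From HB Require Import structures.
From mathcomp Require Import all_boot all_order all_algebra.
From mathcomp Require Import all_classical all_reals all_analysis.
Import Order.TTheory GRing.Theory Num.Theory.
Import numFieldNormedType.Exports.
Local Open Scope ring_scope.

(** * Graphs
   A finite simple undirected graph is given by a vertex finType [V] and an
   edge set [E : {set {set V}}] whose elements are 2-element subsets of [V]. *)

Definition edge {V : finType} (E : {set {set V}}) := {e : {set V} | e \in E}.

Definition cut_vector (R : realType) (V : finType) (E : {set {set V}})
  (S : {set V}) : edge E -> R :=
  fun e => if #|val e :&: S| == 1%N then 1 else 0.

Definition conv_hull {R : realType} {I : finType} {D : Type} (p : I -> D -> R)
  : set (D -> R) :=
  fun x => exists lam : I -> R,
     [/\ forall i, 0 <= lam i, \sum_i lam i = 1 &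
         forall d, x d = \sum_i lam i * p i d].

Definition cut_polytope (R : realType) (V : finType) (E : {set {set V}})
  : set (edge E -> R) :=
  conv_hull (fun S : {set V} => cut_vector R V E S).

(** |D|-dimensional Lebesgue volume of a set A ⊆ R^D (D a finite index type),
   defined as the iterated Lebesgue integral of the indicator of A over the
   coordinates listed in [s] (Tonelli: equals the product Lebesgue measure
   for measurable A, e.g. polytopes). [x] holds the not-yet-integrated
   coordinates. *)
Fixpoint iter_vol (R : realType) (D : eqType) (A : set (D -> R)) (s : seq D)
  (x : D -> R) : \bar R :=
  match s with
  | [::] => (\1_A x)%:E
  | d :: s' =>
      (\int[@lebesgue_measure R]_t
         iter_vol R D A s' (fun d' => if d' == d then t else x d'))%E
  end.

Definition volume (R : realType) (D : finType) (A : set (D -> R)) : \bar R :=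
  iter_vol R D A (enum D) (fun _ => 0).

Definition cut_vol (R : realType) (V : finType) (E : {set {set V}}) : \bar R :=
  volume R (edge E) (cut_polytope R V E).

Definition cycle_edges (k : nat) : {set {set 'I_k}} :=
  [set e : {set 'I_k} | [exists i : 'I_k, exists j : 'I_k,
     (val j == (i.+1 %% k)%N) && (e == [set i; j])]].

(** Vertices are pairs (i, j) with i < n, j < m i; vertex (i, 0) is the
   vertex i of the base cycle C_n, and C^i is the cycle on the vertices
   (i, 0), (i, 1), ..., (i, m i - 1). *)
Definition necklace_vertex {n : nat} (m : 'I_n -> nat) :=
  {i : 'I_n & 'I_(m i)}.

Definition necklace_adj {n : nat} (m : 'I_n -> nat)
  (u v : necklace_vertex m) : bool :=
  [&& val (tagged u) == 0%N, val (tagged v) == 0%N &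
      val (tag v) == ((val (tag u)).+1 %% n)%N]
  || ((tag u == tag v) && (val (tagged v) == ((val (tagged u)).+1 %% m (tag u))%N)).

Definition necklace_edges {n : nat} (m : 'I_n -> nat)
  : {set {set necklace_vertex m}} :=
  [set e | [exists u : necklace_vertex m, exists v : necklace_vertex m, necklace_adj m u v && (e == [set u; v])]].

(* Main.v *)
Require Import Defs.
From HB Require Import structures.
From mathcomp Require Import all_boot all_order all_algebra.
From mathcomp Require Import all_classical all_reals all_analysis.
Import Order.TTheory GRing.Theory Num.Theory.
Import numFieldNormedType.Exports.
Local Open Scope ring_scope.

Section Iter.
Variable R : realType.
Local Notation leb := (@lebesgue_measure R).
Local Open Scope ereal_scope.
Import HBNNSimple.

Lemma integralMc (F : R -> \bar R) (c : R) : (forall t, 0 <= F t) -> (0 <= c)%R ->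
  \int[leb]_t (F t * c%:E) = (\int[leb]_t F t) * c%:E.
Proof.
move=> F0; rewrite le_eqVlt => /orP[/eqP c0|c0].
  rewrite -c0 mule0; apply: integral0_eq => t _; by rewrite mule0.
have F0' t : 0 <= F t * c%:E by rewrite mule_ge0 // lee_fin ltW.
rewrite !ge0_integralTE // muleC -ereal_sup_pZl //.
congr ereal_sup; rewrite eqEsubset; split; [move=> _ [h hle <-]|move=> _ [_ [h hle <-] <-]].
- have ci : (0 <= c^-1)%R by rewrite invr_ge0 ltW.
  eexists.
    exists (scale_nnsfun h ci) => // x /=.
    have hx := hle x.
    have h0 : (0 <= h x)%R by exact: fun_ge0.
    rewrite EFinM.
    apply: le_trans (lee_pmul _ _ (lexx (c^-1)%:E) hx) _.
    - by rewrite lee_fin.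
    - by rewrite lee_fin.
    by rewrite [F x * _]muleC muleA -EFinM mulVf ?gt_eqF // mul1e.
  rewrite [X in _ * X = _](_ : _ = (c^-1)%:E * sintegral leb h); last exact: sintegralrM.
  by rewrite muleA -EFinM divff ?gt_eqF // mul1e.
- exists (scale_nnsfun h (ltW c0)).
    move=> x /=; rewrite mulrC EFinM lee_pmul2r ?lte_fin //; exact: hle.
  exact: sintegralrM.
Qed.


Lemma le_integralT (F G : R -> \bar R) : (forall t, 0 <= F t) ->
  (forall t, F t <= G t) -> \int[leb]_t F t <= \int[leb]_t G t.
Proof.
move=> F0 FG; have G0 t : 0 <= G t by exact: le_trans (F0 t) (FG t).
rewrite !ge0_integralTE //; apply: ereal_sup_le => _ [h hle <-].
by exists h => // x; exact: le_trans (hle x) (FG x).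
Qed.

Lemma integral_indic01 : \int[leb]_t (\1_(`[0%R, 1%R]%classic : set R) t)%:E = 1.
Proof.
rewrite integral_indic //= setIT lebesgue_measure_itv /= lte_fin ltr01.
by rewrite oppr0 adde0.
Qed.

Definition upd (D : eqType) (x : D -> R) (d : D) (t : R) : D -> R :=
  fun d' => if d' == d then t else x d'.
Arguments upd {D}.

Fixpoint iterf (D : eqType) (g : (D -> R) -> R) (s : seq D) (x : D -> R) : \bar R :=
  match s with
  | [::] => (g x)%:E
  | d :: s' => \int[leb]_t iterf D g s' (upd x d t)
  end.
Arguments iterf {D}.

Lemma iter_volE (D : eqType) (A : set (D -> R)) s x :
  iter_vol R D A s x = iterf (fun y => \1_A y) s x.
Proof.
elim: s x => [//|d s IH] x /=.
by congr (integral _ _ _); apply/funext => t; rewrite IH.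
Qed.

Section IterD.
Variable D : eqType.

Lemma iterf_ext (P : pred D) (g : (D -> R) -> R) :
  (forall x y, (forall d, P d -> x d = y d) -> g x = g y) ->
  forall s x y, (forall d, P d -> d \notin s -> x d = y d) ->
  iterf g s x = iterf g s y.
Proof.
move=> gP; elim=> [|d s IH] x y xy /=.
  by congr EFin; apply: gP => d Pd; apply: xy.
congr (integral _ _ _); apply/funext => t; apply: IH => d' Pd' nd'.
rewrite /upd; case: eqP => // /eqP nd; apply: xy => //.
by rewrite in_cons negb_or nd.
Qed.

Lemma iterf_ge0 (g : (D -> R) -> R) : (forall x, (0 <= g x)%R) ->
  forall s x, 0 <= iterf g s x.
Proof.
move=> g0; elim=> [|d s IH] x /=; first by rewrite lee_fin.
by apply: integral_ge0 => t _.
Qed.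

Definition out01 (t : R) := ((t < 0) || (1 < t))%R.

Variables (K : pred D) (g : (D -> R) -> R).
Hypothesis g01 : forall x, (0 <= g x <= 1)%R.
Hypothesis gz : forall x d, K d -> out01 (x d) -> g x = 0%R.

Lemma iterf_zero s x d : d \notin s -> K d -> out01 (x d) -> iterf g s x = 0.
Proof.
elim: s x => [|d' s IH] x /=; first by move=> _ Kd o; rewrite (gz _ _ Kd o).
rewrite in_cons negb_or => /andP[dd' ds] Kd o.
apply: integral0_eq => t _; apply: IH => //.
by rewrite /upd (negbTE dd').
Qed.

Lemma iterf_le1 s : uniq s -> all K s -> forall x, iterf g s x <= 1.
Proof.
elim: s => [|d s IH] /=; first by move=> _ _ x; rewrite lee_fin; case/andP: (g01 x).
case/andP=> ds us /andP[Kd Ks] x.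
rewrite -integral_indic01; apply: le_integralT => [t|t].
  by apply: iterf_ge0 => y; case/andP: (g01 y).
rewrite indicE; have [tin|tout] := boolP (t \in _).
  by apply: IH.
rewrite (@iterf_zero _ _ d) //.
move: tout; rewrite /upd eqxx /out01 => tout.
apply/negPn/negP => /norP[]; rewrite -!leNgt => a b; apply: (negP tout).
by rewrite inE /= in_itv /= a b.
Qed.

End IterD.

Section Factor.
Variables (D : eqType) (I : finType) (P : I -> pred D) (g : I -> (D -> R) -> R).
Hypothesis cover : forall d, exists k, P k d.
Hypothesis disj : forall d k k', P k d -> P k' d -> k = k'.
Hypothesis dep : forall k x y, (forall d, P k d -> x d = y d) -> g k x = g k y.
Hypothesis g01 : forall k x, (0 <= g k x <= 1)%R.
Hypothesis gz : forall k x d, P k d -> out01 (x d) -> g k x = 0%R.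

Lemma iterf_factor s : uniq s -> forall x,
  iterf (fun y => \prod_k g k y)%R s x = \prod_k iterf (g k) (seq.filter (P k) s) x.
Proof.
elim: s => [|d s IH] /=; first by move=> _ x; rewrite prodEFin.
case/andP=> ds us x.
have [k0 Pk0] := cover d.
have fl k : k != k0 -> P k d = false.
  move=> kk0; apply/negP => Pkd; case/eqP: kk0; exact: disj Pkd Pk0.
rewrite (bigD1 k0) //= Pk0 /=.
under eq_bigr => k kk0 do rewrite (fl k kk0).
set C := (\prod_(k | k != k0) _).
have C0 : 0 <= C by apply: prode_ge0 => k _; apply: iterf_ge0 => y; case/andP: (g01 k y).
have Cfin : C \is a fin_num.
  apply: prode_fin_num => k _; rewrite ge0_fin_numE; last first.
    by apply: iterf_ge0 => y; case/andP: (g01 k y).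
  apply: le_lt_trans (ltry 1); apply: (@iterf_le1 D (P k) (g k) (g01 k)).
  - by move=> y d'; apply: gz.
  - exact: filter_uniq.
  - exact: filter_all.
rewrite -(fineK Cfin) -integralMc; last 2 first.
- by move=> t; apply: iterf_ge0 => y; case/andP: (g01 k0 y).
- exact: fine_ge0.
congr (integral _ _ _); apply/funext => t.
rewrite IH // (bigD1 k0) //= fineK //; congr (_ * _).
apply: eq_bigr => k kk0; apply: (@iterf_ext D (P k)) => [y z|d' Pd' _].
  exact: dep.
rewrite /upd; case: eqP => // dd; subst d'.
by case/eqP: kk0; exact: disj Pd' Pk0.
Qed.

End Factor.

Lemma iterf_map (D1 D2 : eqType) (f : D1 -> D2) (g : (D1 -> R) -> R) :
  injective f -> forall l x,
  iterf (fun y => g (y \o f)) (map f l) x = iterf g l (x \o f).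
Proof.
move=> finj; elim=> [|d l IH] x //=.
congr (integral _ _ _); apply/funext => t; rewrite IH; congr iterf.
by apply/funext => d' /=; rewrite /upd (inj_eq finj).
Qed.

Lemma perm_to_fun (T : finType) (l : seq T) : uniq l -> (forall e, e \in l) ->
  exists2 s : T -> T, injective s & l = map s (enum T).
Proof.
move=> ul fl.
have pl : perm_eq l (enum T) by apply: uniq_perm => // [|e]; [exact: enum_uniq|by rewrite fl mem_enum].
have sz := perm_size pl.
pose s (e : T) := nth e l (index e (enum T)).
have ie e : (index e (enum T) < size l)%N by rewrite sz index_mem mem_enum.
exists s.
  move=> e1 e2; rewrite /s (set_nth_default e1 e2 (ie e2)) => /eqP.
  rewrite nth_uniq // => /eqP h.
  by rewrite -(nth_index e1 (mem_enum T e1)) h nth_index // mem_enum.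
case: (pickP (fun _ : T => true)) => [y _|T0]; last first.
  have e0 : enum T = [::] by case E: (enum T) => [//|x r]; have := T0 x.
  by rewrite e0 /=; apply: size0nil; rewrite sz e0.
apply: (@eq_from_nth _ y); first by rewrite size_map.
move=> i ilt; rewrite (nth_map y); last by rewrite -sz.
rewrite /s index_uniq ?enum_uniq -?sz //.
by apply: set_nth_default.
Qed.

Lemma iterf_sym (T : finType) (A : set (T -> R)) :
  (forall s : T -> T, injective s -> forall x, A x -> A (x \o s)) ->
  forall l, uniq l -> (forall e, e \in l) ->
  iterf (fun y => \1_A y) l (fun _ => 0%R) = iterf (fun y => \1_A y) (enum T) (fun _ => 0%R).
Proof.
move=> sym l ul fl; have [s sinj ->] := @perm_to_fun T l ul fl.
have eqA y : \1_A y = \1_A (y \o s) :> R.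
  have Ae : A y <-> A (y \o s).
    split; first exact: sym.
    move=> Ays; pose t := invF sinj.
    have tinj : injective t by apply: (can_inj (f_invF sinj)).
    have := sym t tinj _ Ays.
    by congr A; apply/funext => e /=; rewrite f_invF.
  rewrite !indicE; suff -> : (y \in A) = ((y \o s) \in A) by [].
  by apply/idP/idP; rewrite !in_setE; apply Ae.
transitivity (iterf (fun y => \1_A (y \o s)) (map s (enum T)) (fun _ => 0%R)).
  by congr iterf; apply/funext.
exact: (@iterf_map T T s (fun y => \1_A y) sinj).
Qed.

End Iter.

Section Conv.
Variable R : realType.

Lemma conv_reindex (I J : finType) (D : Type) (p : I -> D -> R) (phi : J -> I)
  (ka : J -> R) (x : D -> R) :
  (forall j, 0 <= ka j) -> \sum_j ka j = 1 ->
  (forall d, x d = \sum_j ka j * p (phi j) d) -> conv_hull p x.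
Proof.
move=> k0 k1 kx.
exists (fun i => \sum_(j | phi j == i) ka j); split.
- by move=> i; apply: sumr_ge0.
- by rewrite -k1 (partition_big phi predT) //.
- move=> d; rewrite kx (partition_big phi predT) //=.
  apply: eq_bigr => i _; rewrite mulr_suml; apply: eq_bigr => j /eqP <-.
  by [].
Qed.

Lemma conv_01 (I D : finType) (p : I -> D -> R) x :
  (forall i d, p i d = 0 \/ p i d = 1) -> conv_hull p x -> forall d, 0 <= x d <= 1.
Proof.
move=> p01 [lam [l0 l1 lx]] d; rewrite lx; apply/andP; split.
  apply: sumr_ge0 => i _; apply: mulr_ge0 => //; by case: (p01 i d) => ->.
rewrite -l1; apply: ler_sum => i _; rewrite -[leRHS]mulr1; apply: ler_wpM2l => //.
by case: (p01 i d) => ->.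
Qed.

End Conv.

Definition cutb {V : finType} (S e : {set V}) := #|e :&: S| == 1%N.

Lemma cutb2 (V : finType) (S : {set V}) (u v : V) : u != v ->
  cutb S [set u; v] = ((u \in S) != (v \in S)).
Proof.
move=> uv; rewrite /cutb.
have [uS|uS] := boolP (u \in S); have [vS|vS] := boolP (v \in S) => /=.
- have -> : [set u; v] :&: S = [set u; v].
    apply/setP => w; rewrite !inE; case: (eqVneq w u) => [wu|wu]; [subst w; rewrite ?eqxx ?(negbTE uv) ?uS ?(negbTE uS) //= | case: (eqVneq w v) => [wv|wv]; [subst w; rewrite ?eqxx ?(negbTE wu) ?vS ?(negbTE vS) //= | rewrite ?(negbTE wu) ?(negbTE wv) //= ?andbF]].
  by rewrite cards2 uv.
- have -> : [set u; v] :&: S = [set u].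
    apply/setP => w; rewrite !inE; case: (eqVneq w u) => [wu|wu]; [subst w; rewrite ?eqxx ?(negbTE uv) ?uS ?(negbTE uS) //= | case: (eqVneq w v) => [wv|wv]; [subst w; rewrite ?eqxx ?(negbTE wu) ?vS ?(negbTE vS) //= | rewrite ?(negbTE wu) ?(negbTE wv) //= ?andbF]].
  by rewrite cards1.
- have -> : [set u; v] :&: S = [set v].
    apply/setP => w; rewrite !inE; case: (eqVneq w u) => [wu|wu]; [subst w; rewrite ?eqxx ?(negbTE uv) ?uS ?(negbTE uS) //= | case: (eqVneq w v) => [wv|wv]; [subst w; rewrite ?eqxx ?(negbTE wu) ?vS ?(negbTE vS) //= | rewrite ?(negbTE wu) ?(negbTE wv) //= ?andbF]].
  by rewrite cards1.
- have -> : [set u; v] :&: S = finset.set0.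
    apply/setP => w; rewrite !inE; case: (eqVneq w u) => [wu|wu]; [subst w; rewrite ?eqxx ?(negbTE uv) ?uS ?(negbTE uS) //= | case: (eqVneq w v) => [wv|wv]; [subst w; rewrite ?eqxx ?(negbTE wu) ?vS ?(negbTE vS) //= | rewrite ?(negbTE wu) ?(negbTE wv) //= ?andbF]].
  by rewrite cards0.
Qed.

Lemma cardP_sum (T : finType) (p : pred T) : #|[set i | p i]| = (\sum_i (p i : nat))%N.
Proof.
rewrite -sum1_card big_mkcond /=; apply: eq_bigr => i _; rewrite inE.
by case: (p i).
Qed.

From mathcomp Require Import zify.

Section Cycle.
Variable k : nat.
Hypothesis hk : (2 < k)%N.

Let k0 : (0 < k)%N. Proof. by apply: leq_trans hk. Qed.

Definition succ (i : 'I_k) : 'I_k := Ordinal (ltn_pmod i.+1 k0).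

Lemma succ_val (i : 'I_k) : nat_of_ord (succ i) = if i.+1 == k then 0%N else i.+1.
Proof.
rewrite /=; have := ltn_ord i; case: eqP => [->|ne] hi; first by rewrite modnn.
by rewrite modn_small //; lia.
Qed.

Lemma succ_neq i : i != succ i.
Proof.
apply/eqP => /(congr1 (@nat_of_ord k)); rewrite succ_val; have := ltn_ord i.
by have := hk; case: eqP => h /=; lia.
Qed.

Lemma succ_inj : injective succ.
Proof.
move=> i j /(congr1 (@nat_of_ord k)); rewrite !succ_val => h; apply: val_inj => /=.
have := ltn_ord i; have := ltn_ord j; move: h.
by case: eqP; case: eqP => /=; lia.
Qed.

Lemma eps_proof (i : 'I_k) : [set i; succ i] \in cycle_edges k.
Proof.
rewrite inE; apply/existsP; exists i; apply/existsP; exists (succ i).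
by rewrite !eqxx.
Qed.

Definition eps (i : 'I_k) : edge (cycle_edges k) := exist _ [set i; succ i] (eps_proof i).

Lemma eps_surj e : exists i, e = eps i.
Proof.
case: e => S H; have := H; rewrite inE => /existsP[i /existsP[j /andP[/eqP hj /eqP eS]]].
exists i; apply: val_inj => /=; rewrite eS; congr [set _; _]; exact: val_inj.
Qed.

Lemma eps_inj : injective eps.
Proof.
move=> i j /(congr1 val) /= h.
have hi : i \in [set j; succ j] by rewrite -h !inE eqxx.
have hj : j \in [set i; succ i] by rewrite h !inE eqxx.
move: hi hj; rewrite !inE => /orP[/eqP //|/eqP ->] /orP[/eqP h0|/eqP hh].
  by move: (succ_neq j); rewrite -h0 eqxx.
exfalso; have e := congr1 (@nat_of_ord k) hh; have h1 := succ_val j; have h2 := succ_val (succ j).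
move: e h1 h2; set a := nat_of_ord (succ j); set b := nat_of_ord (succ (succ j)).
case: (j.+1 == k) /eqP => ?; case: (a.+1 == k) /eqP => ?; have := ltn_ord j; have := hk; lia.
Qed.

Lemma card_edges (q : pred (edge (cycle_edges k))) :
  #|[set e | q e]| = #|[set i | q (eps i)]|.
Proof.
rewrite -(card_imset _ eps_inj); apply: eq_card => e.
have [i ->] := eps_surj e; by rewrite mem_imset ?inE //; exact: eps_inj.
Qed.

Lemma cut_eps (S : {set 'I_k}) i : cutb S (val (eps i)) = ((i \in S) != (succ i \in S)).
Proof. exact: cutb2 (succ_neq i). Qed.

Lemma cut_even (S : {set 'I_k}) : ~~ odd #|[set e : edge (cycle_edges k) | cutb S (val e)]|.
Proof.
rewrite card_edges cardP_sum.
pose a i := (i \in S).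
have E : ((\sum_i ((a i != a (succ i)) : nat)) + (\sum_i ((a i && a (succ i)) : nat)).*2
          = (\sum_i (a i : nat)).*2)%N.
  have Hs : (\sum_i (a (succ i) : nat) = \sum_i (a i : nat))%N.
    by rewrite [RHS](reindex_inj succ_inj).
  rewrite -[in RHS]addnn -{2}Hs -big_split /= -mul2n big_distrr /= -big_split /=.
  apply: eq_bigr => i _.
  by case: (a i); case: (a (succ i)).
have : odd (((\sum_i ((a i != a (succ i)) : nat)) + (\sum_i ((a i && a (succ i)) : nat)).*2))
       = odd ((\sum_i (a i : nat)).*2) by rewrite E.
rewrite oddD !odd_double addbF => H.
under eq_bigr => i _ do rewrite cut_eps.
by rewrite /a in H; rewrite H.
Qed.


Lemma even_cut (F : {set edge (cycle_edges k)}) : ~~ odd #|F| ->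
  exists S : {set 'I_k}, forall e, cutb S (val e) = (e \in F).
Proof.
move=> evF.
pose q (i : 'I_k) := eps i \in F.
pose cnt (m : nat) := (\sum_(l : 'I_k) (((l < m)%N && q l) : nat))%N.
have cntS (i : 'I_k) : cnt i.+1 = (cnt i + q i)%N.
  rewrite /cnt (bigD1 i) //= ltnSn [in RHS](bigD1 i) //= ltnn /= add0n addnC; congr (_ + _)%N.
  apply: eq_bigr => l li; rewrite ltnS leq_eqVlt.
  suff -> : (nat_of_ord l == nat_of_ord i) = false by [].
  by apply/negbTE.
have cnt0 : cnt 0%N = 0%N by rewrite /cnt big1.
have cntk : cnt k = #|F|.
  rewrite /cnt (_ : #|F| = #|[set e | e \in F]|); last by apply: eq_card => e; rewrite inE.
  rewrite card_edges cardP_sum; apply: eq_bigr => l _; by rewrite ltn_ord.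
exists [set j : 'I_k | odd (cnt j)] => e.
have [i ->] := eps_surj e; rewrite cut_eps !inE succ_val.
have := ltn_ord i; rewrite leq_eqVlt => /orP[/eqP ik|ik].
  rewrite ik eqxx cnt0 /=.
  have ek : cnt k = cnt i.+1 by rewrite ik.
  move: evF; rewrite -cntk ek cntS oddD /q.
  by case: (odd _); case: (eps i \in F).
rewrite (ltn_eqF ik) cntS oddD /q.
by case: (odd _); case: (eps i \in F).
Qed.

End Cycle.
Arguments succ {k}. Arguments eps {k}. Arguments eps_surj {k}. Arguments eps_inj {k}.
Arguments cut_eps {k}. Arguments succ_val {k}. Arguments succ_neq {k}. Arguments succ_inj {k}.
Arguments card_edges {k}. Arguments cut_even {k}.

Lemma cut_polytope01 (R : realType) (V : finType) (E : {set {set V}}) x :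
  cut_polytope R V E x -> forall d, (0 <= x d <= 1)%R.
Proof.
apply: conv_01 => S d; rewrite /cut_vector; case: ifP; by [right|left].
Qed.

Lemma cycle_sym (R : realType) (k : nat) (hk : (2 < k)%N)
  (s : edge (cycle_edges k) -> edge (cycle_edges k)) : injective s ->
  forall x, cut_polytope R _ (cycle_edges k) x -> cut_polytope R _ (cycle_edges k) (x \o s).
Proof.
move=> sinj x [lam [l0 l1 lx]].
have ex S : exists S' : {set 'I_k}, forall e, cutb S (val (s e)) = cutb S' (val e).
  have [|S' HS'] := @even_cut k hk [set e | cutb S (val (s e))].
    rewrite (_ : [set e | cutb S (val (s e))] = s @^-1: [set e | cutb S (val e)]).
      by rewrite card_preimset //; exact: cut_even.
    by apply/setP => e; rewrite !inE.
  by exists S' => e; rewrite HS' inE.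
have [phi Hphi] := choice ex.
apply: (@conv_reindex R _ _ _ _ phi lam) => // d /=.
rewrite lx; apply: eq_bigr => S _; congr (_ * _)%R.
by rewrite /cut_vector -/(cutb _ _) -/(cutb _ _) Hphi.
Qed.

Lemma imset2 (aT rT : finType) (f : aT -> rT) a b : f @: [set a; b] = [set f a; f b].
Proof. by rewrite imsetU1 imset_set1. Qed.

Section Neck.
Variables (n : nat) (m : 'I_n -> nat).
Hypothesis hn : (2 < n)%N.
Hypothesis hm : forall i, (2 < m i)%N.
Local Notation V := (necklace_vertex m).
Local Notation E := (necklace_edges m).

Let mpos i : (0 < m i)%N. Proof. by have := hm i; lia. Qed.
Definition z i : 'I_(m i) := Ordinal (mpos i).
Definition vI (i : 'I_n) (j : 'I_(m i)) : V := existT _ i j.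
Arguments vI {i}.
Definition v0 (i : 'I_n) : V := vI (z i).

Lemma vI_inj i : injective (@vI i).
Proof.
move=> a b h; have := congr1 (tagged_as (vI a)) h.
by rewrite /vI !tagged_asE.
Qed.

Lemma v0_inj : injective v0.
Proof. by move=> a b /(congr1 tag). Qed.

Lemma iota0_proof (e : edge (cycle_edges n)) : v0 @: val e \in E.
Proof.
have [a ->] := eps_surj hn e; rewrite /= imset2 inE.
apply/existsP; exists (v0 a); apply/existsP; exists (v0 (succ hn a)).
by rewrite /necklace_adj /= !eqxx.
Qed.

Lemma iotaI_proof i (e : edge (cycle_edges (m i))) : (@vI i) @: val e \in E.
Proof.
have [a ->] := eps_surj (hm i) e; rewrite /= imset2 inE.
apply/existsP; exists (vI a); apply/existsP; exists (vI (succ (hm i) a)).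
by rewrite /necklace_adj /= !eqxx orbT.
Qed.

Definition iota0 (e : edge (cycle_edges n)) : edge E :=
  exist (fun S => S \in E) _ (iota0_proof e).
Definition iotaI i (e : edge (cycle_edges (m i))) : edge E :=
  exist (fun S => S \in E) _ (@iotaI_proof i e).
Arguments iotaI {i}.

Lemma iota0_eps a : val (iota0 (eps hn a)) = [set v0 a; v0 (succ hn a)].
Proof. by rewrite /= imset2. Qed.

Lemma iotaI_eps i a : val (iotaI (eps (hm i) a)) = [set vI a; vI (succ (hm i) a)].
Proof. by rewrite /= imset2. Qed.

Lemma iota0_inj : injective iota0.
Proof. move=> e1 e2 /(congr1 val) /= /(imset_inj v0_inj); exact: val_inj. Qed.

Lemma iotaI_inj i : injective (@iotaI i).
Proof. move=> e1 e2 /(congr1 val) /= /(imset_inj (@vI_inj i)); exact: val_inj. Qed.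

Lemma ecase (e : edge E) :
  (exists e', e = iota0 e') \/ (exists i, exists e', e = @iotaI i e').
Proof.
case: e => S H; have := H; rewrite inE => /existsP[u /existsP[v /andP[adj /eqP eS]]].
case: u adj eS => i a; case: v => i' b.
rewrite /necklace_adj /= => /orP[/and3P[a0 b0 hi]|/andP[/eqP ii hb]] eS.
- left.
  have ep : [set i; i'] \in cycle_edges n.
    by rewrite inE; apply/existsP; exists i; apply/existsP; exists i'; rewrite hi eqxx.
  exists (exist (fun S => S \in cycle_edges n) _ ep); apply: val_inj => /=; rewrite eS imset2.
  have -> : a = z i by apply: val_inj; apply/eqP.
  have -> : b = z i' by apply: val_inj; apply/eqP.
  by [].
- right; subst i'.
  have ep : [set a; b] \in cycle_edges (m i).
    by rewrite inE; apply/existsP; exists a; apply/existsP; exists b; rewrite hb eqxx.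
  by exists i; exists (exist (fun S => S \in cycle_edges (m i)) _ ep); apply: val_inj => /=; rewrite eS imset2.
Qed.

Definition P0 (e : edge E) : bool := [exists e', iota0 e' == e].
Definition PI i (e : edge E) : bool := [exists e', @iotaI i e' == e].

Lemma P0_iota0 e' : P0 (iota0 e').
Proof. by apply/existsP; exists e'. Qed.

Lemma PI_iotaI i e' : PI i (@iotaI i e').
Proof. by apply/existsP; exists e'. Qed.

Lemma tag_iotaI i e' v : v \in val (@iotaI i e') -> tag v = i.
Proof. by case/imsetP => j _ ->. Qed.
Arguments tag_iotaI {i e' v}.

Lemma mem_iota0 e' v : v \in val (iota0 e') -> v = v0 (tag v).
Proof. by case/imsetP => j _ ->. Qed.
Arguments mem_iota0 {e' v}.

Lemma P0_PI e i : P0 e -> PI i e -> False.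
Proof.
case/existsP => e1 /eqP <- /existsP[e2 /eqP h].
have [a ea] := eps_surj hn e1; subst e1.
have h1 : v0 a \in val (iotaI e2) by rewrite h iota0_eps !inE eqxx.
have h2 : v0 (succ hn a) \in val (iotaI e2) by rewrite h iota0_eps !inE eqxx orbT.
have t1 := tag_iotaI h1; have t2 := tag_iotaI h2.
by move: (succ_neq hn a); rewrite /= in t1 t2; rewrite t2 t1 eqxx.
Qed.

Lemma PI_uniq e i j : PI i e -> PI j e -> i = j.
Proof.
case/existsP => e1 /eqP <- /existsP[e2 /eqP h].
have [a ea] := eps_surj (hm i) e1; subst e1.
have h1 : vI a \in val (iotaI e2) by rewrite h iotaI_eps !inE eqxx.
by rewrite -(tag_iotaI h1).
Qed.

Lemma notPI_vert i e : ~~ PI i e -> forall v, v \in val e -> tag v != i \/ v = v0 i.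
Proof.
move=> nP v ve; case: (ecase e) => [[e' ee]|[j [e' ee]]]; subst e.
  have vv := mem_iota0 ve; case: (eqVneq (tag v) i) => [ti|]; last by left.
  by right; rewrite vv ti.
left; rewrite (tag_iotaI ve); apply/eqP => ji; subst j.
by move: nP; rewrite PI_iotaI.
Qed.
Arguments notPI_vert {i e}.

Lemma cutb_imset (aT rT : finType) (f : aT -> rT) (S : {set rT}) (e : {set aT}) :
  injective f -> cutb S (f @: e) = cutb (f @^-1: S) e.
Proof.
move=> finj; rewrite /cutb (_ : f @: e :&: S = f @: (e :&: f @^-1: S)) ?card_imset //.
apply/setP => v; rewrite !inE; apply/andP/imsetP.
  by case=> /imsetP[a ae ->] fS; exists a => //; rewrite !inE ae.
by case=> a; rewrite !inE => /andP[ae fa] ->; split => //; apply: imset_f.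
Qed.

Lemma cutb_congr (T : finType) (S1 S2 e : {set T}) :
  (forall v, v \in e -> (v \in S1) = (v \in S2)) -> cutb S1 e = cutb S2 e.
Proof.
move=> H; rewrite /cutb; congr (_ == _); apply: eq_card => v.
rewrite !inE; case ve: (v \in e) => //=; rewrite ?andbF ?andbT; exact: H.
Qed.

Variable R : realType.
Local Notation CutG := (cut_polytope R V E).
Local Notation Cutn := (cut_polytope R _ (cycle_edges n)).
Local Notation CutI i := (cut_polytope R _ (cycle_edges (m i))).

Lemma cut_fwd0 x : CutG x -> Cutn (x \o iota0).
Proof.
case=> lam [l0 l1 lx].
apply: (@conv_reindex R _ _ _ (fun S => cut_vector R _ (cycle_edges n) S) (fun S : {set V} => v0 @^-1: S) lam) => // d /=.
rewrite lx; apply: eq_bigr => S _; congr (_ * _)%R.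
by rewrite /cut_vector -/(cutb _ _) -/(cutb _ _) /= cutb_imset //; exact: v0_inj.
Qed.

Lemma cut_fwdI i x : CutG x -> CutI i (x \o @iotaI i).
Proof.
case=> lam [l0 l1 lx].
apply: (@conv_reindex R _ _ _ (fun S => cut_vector R _ (cycle_edges (m i)) S) (fun S : {set V} => (@vI i) @^-1: S) lam) => // d /=.
rewrite lx; apply: eq_bigr => S _; congr (_ * _)%R.
by rewrite /cut_vector -/(cutb _ _) -/(cutb _ _) /= cutb_imset //; exact: vI_inj.
Qed.

Lemma conv_point (I D : finType) (p : I -> D -> R) i : conv_hull p (p i).
Proof.
exists (fun j => ((j == i)%:R)%R); split.
- by move=> j; rewrite ler0n.
- by rewrite (bigD1 i) //= eqxx big1 ?addr0 // => j /negbTE ->.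
- move=> d; rewrite (bigD1 i) //= eqxx mul1r big1 ?addr0 // => j /negbTE ->.
  by rewrite mul0r.
Qed.

Lemma sum_pair (T1 T2 : finType) (F : T1 -> R) (G : T2 -> R) (H : T1 -> T2 -> R) :
  (\sum_(p : T1 * T2) F p.1 * G p.2 * H p.1 p.2 = \sum_S F S * \sum_T G T * H S T)%R.
Proof.
rewrite -(pair_bigA _ (fun S T => F S * G T * H S T)%R) /=.
by apply: eq_bigr => S _; rewrite mulr_sumr; apply: eq_bigr => T _; rewrite mulrA.
Qed.

Lemma repI i x y w : CutG x -> CutI i y ->
  (forall e', w (@iotaI i e') = y e') -> (forall e, ~~ PI i e -> w e = x e) -> CutG w.
Proof.
case=> lam [l0 l1 lx] [mu [u0 u1 uy]] wI wO.
pose T' (S : {set V}) (T : {set 'I_(m i)}) := if (z i \in T) == (v0 i \in S) then T else ~: T.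
pose mg (S : {set V}) (T : {set 'I_(m i)}) := [set v in S | tag v != i] :|: (@vI i) @: (T' S T).
have memI S T j : (vI j \in mg S T) = (j \in T' S T).
  by rewrite !inE /= eqxx andbF /= mem_imset //; exact: vI_inj.
have memO S T v : tag v != i -> (v \in mg S T) = (v \in S).
  move=> tv; rewrite !inE tv andbT; case: (boolP (v \in _ @: _)) => [/imsetP[j _ vj]|]; last by rewrite orbF.
  by move: tv; rewrite vj eqxx.
have kI S T e' : cutb (mg S T) (val (@iotaI i e')) = cutb T (val e').
  have [a ->] := eps_surj (hm i) e'; rewrite iotaI_eps cut_eps cutb2; last first.
    by rewrite (inj_eq (@vI_inj i)) succ_neq.
  rewrite !memI /T'; case: ifP => _ //; by rewrite !inE; case: (a \in T); case: (_ \in T).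
have kO S T e : ~~ PI i e -> cutb (mg S T) (val e) = cutb S (val e).
  move=> nP; apply: cutb_congr => v ve; case: (notPI_vert nP v ve) => [tv|->].
    exact: memO.
  rewrite /v0 memI /T'; case: ifP => [/eqP -> //|]; rewrite !inE.
  by case: (z i \in T); case: (vI (z i) \in S).
apply: (@conv_reindex R _ _ _ (fun S => cut_vector R _ E S) (fun p => mg p.1 p.2)
   (fun p => lam p.1 * mu p.2)%R).
- by move=> p; apply: mulr_ge0.
- rewrite -(pair_bigA _ (fun S T => lam S * mu T)%R) /=.
  rewrite -[RHS]l1; apply: eq_bigr => S _; by rewrite -mulr_sumr u1 mulr1.
- move=> e; rewrite (@sum_pair _ _ lam mu (fun S T => cut_vector R _ E (mg S T) e)).
  case: (boolP (PI i e)) => [/existsP[e' /eqP <-]|nP].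
    rewrite wI uy.
    under [RHS]eq_bigr => S _ do under eq_bigr => T _ do rewrite /cut_vector -/(cutb _ _) kI.
    by rewrite -big_distrl /= l1 mul1r.
  rewrite wO // lx; apply: eq_bigr => S _.
  under eq_bigr => T _ do rewrite /cut_vector -/(cutb _ _) kO //.
  by rewrite -big_distrl /= u1 mul1r.
Qed.

Lemma rep0 x y w : CutG x -> Cutn y ->
  (forall e', w (iota0 e') = y e') -> (forall e, ~~ P0 e -> w e = x e) -> CutG w.
Proof.
case=> lam [l0 l1 lx] [mu [u0 u1 uy]] wI wO.
pose mg (S : {set V}) (T : {set 'I_n}) := [set v : V | (v \in S) != ((v0 (tag v) \in S) != (tag v \in T))].
have kI S T e' : cutb (mg S T) (val (iota0 e')) = cutb T (val e').
  have [a ->] := eps_surj hn e'; rewrite iota0_eps cut_eps cutb2; last first.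
    by rewrite (inj_eq v0_inj) succ_neq.
  rewrite !inE /=.
  by case: (v0 a \in S); case: (v0 (succ hn a) \in S); case: (a \in T); case: (succ hn a \in T).
have kO S T e : ~~ P0 e -> cutb (mg S T) (val e) = cutb S (val e).
  move=> nP; case: (ecase e) => [[e' ee]|[j [e' ee]]]; subst e.
    by move: nP; rewrite P0_iota0.
  have [a ->] := eps_surj (hm j) e'; rewrite iotaI_eps !cutb2; try by rewrite (inj_eq (@vI_inj j)) succ_neq.
  rewrite !inE /=.
  by case: (vI a \in S); case: (vI (succ (hm j) a) \in S); case: (v0 j \in S); case: (j \in T).
apply: (@conv_reindex R _ _ _ (fun S => cut_vector R _ E S) (fun p => mg p.1 p.2)
   (fun p => lam p.1 * mu p.2)%R).
- by move=> p; apply: mulr_ge0.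
- rewrite -(pair_bigA _ (fun S T => lam S * mu T)%R) /=.
  rewrite -[RHS]l1; apply: eq_bigr => S _; by rewrite -mulr_sumr u1 mulr1.
- move=> e; rewrite (@sum_pair _ _ lam mu (fun S T => cut_vector R _ E (mg S T) e)).
  case: (boolP (P0 e)) => [/existsP[e' /eqP <-]|nP].
    rewrite wI uy.
    under [RHS]eq_bigr => S _ do under eq_bigr => T _ do rewrite /cut_vector -/(cutb _ _) kI.
    by rewrite -big_distrl /= l1 mul1r.
  rewrite wO // lx; apply: eq_bigr => S _.
  under eq_bigr => T _ do rewrite /cut_vector -/(cutb _ _) kO //.
  by rewrite -big_distrl /= u1 mul1r.
Qed.

Lemma cut_bwd w : Cutn (w \o iota0) -> (forall i, CutI i (w \o @iotaI i)) -> CutG w.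
Proof.
move=> h0 hI.
pose x0 := cut_vector R V E finset.set0.
have Cx0 : CutG x0 by apply: conv_point.
pose wj (j : nat) e := if P0 e || [exists i : 'I_n, (i < j)%N && PI i e] then w e else x0 e.
have H : forall j, (j <= n)%N -> CutG (wj j).
  elim=> [_|j IH jn].
    apply: (@rep0 _ _ _ Cx0 h0) => [e'|e].
      by rewrite /wj P0_iota0.
    rewrite /wj => /negbTE ->; case: existsP => // -[i].
    by rewrite ltn0.
  pose i := Ordinal jn.
  apply: (@repI i _ _ _ (IH (ltnW jn)) (hI i)) => [e'|e nP].
    rewrite /wj /=; case: ifP => // /negbT; rewrite negb_or => /andP[_ /existsPn /(_ i)].
    by rewrite /= ltnSn PI_iotaI.
  rewrite /wj; congr (if _ then _ else _); congr (_ || _).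
  apply/existsP/existsP => -[i' /andP[lt P]]; exists i'; rewrite P andbT.
    rewrite ltnS leq_eqVlt in lt; case/orP: lt => // /eqP e'; exfalso.
    have ii : i' = i by apply: val_inj.
    by move: nP; rewrite -ii P.
  exact: ltnW.
suff -> : w = wj n by apply: H.
apply/funext => e; rewrite /wj; case: ifP => // /negbT; rewrite negb_or => /andP[nP0 /existsPn nPI].
exfalso; case: (ecase e) => [[e' ee]|[i [e' ee]]]; subst e.
  by rewrite P0_iota0 in nP0.
by have := nPI i; rewrite ltn_ord PI_iotaI.
Qed.

Lemma cut_iff w : CutG w <-> (Cutn (w \o iota0) /\ forall i, CutI i (w \o @iotaI i)).
Proof.
split; first by move=> h; split; [exact: cut_fwd0|move=> i; exact: cut_fwdI].
by case=> h0 hI; exact: cut_bwd.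
Qed.

End Neck.

Lemma big_option_ord (T : Type) (idx : T) (op : Monoid.com_law idx) (n : nat) (i0 : 'I_n)
  (F : option 'I_n -> T) :
  \big[op/idx]_(k : option 'I_n) F k = op (F None) (\big[op/idx]_(i : 'I_n) F (Some i)).
Proof.
rewrite (bigD1 None) //=; congr (op _ _).
rewrite (reindex_onto Some (odflt i0)) => [|[k|] //].
by apply: eq_bigl => j; rewrite eqxx.
Qed.

Lemma filter_image (T1 T2 : finType) (f : T1 -> T2) : injective f ->
  exists l, seq.filter (fun d => [exists e, f e == d]) (enum T2) = map f l /\
            uniq l /\ forall e, e \in l.
Proof.
move=> finj.
have gen (s : seq T2) : exists l, seq.filter (fun d => [exists e, f e == d]) s = map f l.
  elim: s => [|d s [l IH]]; first by exists [::].
  rewrite /=; case: ifP => [/existsP[e /eqP fe]|_]; last by exists l.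
  by exists (e :: l); rewrite /= IH fe.
have [l hl] := gen (enum T2); exists l; split => //; split.
  by rewrite -(map_inj_uniq finj) -hl filter_uniq // enum_uniq.
move=> e; rewrite -(mem_map finj) -hl mem_filter mem_enum andbT.
by apply/existsP; exists e.
Qed.

Lemma factor_block (R : realType) (T : finType) (k : nat) (hk : (2 < k)%N)
  (f : edge (cycle_edges k) -> T) : injective f ->
  iterf R _ (fun y => \1_(cut_polytope R _ (cycle_edges k)) (y \o f))
    (seq.filter (fun d => [exists e, f e == d]) (enum T)) (fun _ => 0%R)
  = cut_vol R _ (cycle_edges k).
Proof.
move=> finj; have [l [hl [ul fl]]] := @filter_image _ _ f finj.
rewrite hl (@iterf_map R _ _ f (fun y => \1_(cut_polytope R _ (cycle_edges k)) y) finj).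
rewrite (@iterf_sym R _ _ _ l ul fl); first by rewrite /cut_vol /volume iter_volE.
by move=> s sinj x; apply: cycle_sym.
Qed.

Theorem neck_vol (R : realType) (n : nat) (m : 'I_n -> nat) :
  (3 <= n)%N -> (forall i, 3 <= m i)%N ->
  cut_vol R _ (necklace_edges m) =
    (cut_vol R _ (cycle_edges n) * \prod_(i < n) cut_vol R _ (cycle_edges (m i)))%E.
Proof.
move=> hn hm.
have i0 : 'I_n by exists 0%N; apply: leq_trans hn.
pose g (k : option 'I_n) : (edge (necklace_edges m) -> R) -> R :=
  match k with
  | None => fun y => \1_(cut_polytope R _ (cycle_edges n)) (y \o iota0 n m hn hm)
  | Some i => fun y => \1_(cut_polytope R _ (cycle_edges (m i))) (y \o iotaI n m hm i)
  end.
pose P (k : option 'I_n) : pred (edge (necklace_edges m)) :=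
  match k with None => P0 n m hn hm | Some i => PI n m hm i end.
have ind : (fun y => \1_(cut_polytope R _ (necklace_edges m)) y) = (fun y => \prod_k g k y)%R.
  apply/funext => y; rewrite (@big_option_ord _ _ _ _ i0) /=.
  case: (pselect (cut_polytope R _ (necklace_edges m) y)) => h.
    have [h0 hI] := (cut_iff n m hn hm R y).1 h.
    rewrite !indicE !mem_set // big1 ?mulr1 // => i _.
    by rewrite indicE mem_set.
  rewrite indicE memNset //.
  case: (pselect (cut_polytope R _ (cycle_edges n) (y \o iota0 n m hn hm))) => h0; last first.
    by rewrite indicE memNset // mul0r.
  case: (pselect (forall i, cut_polytope R _ (cycle_edges (m i)) (y \o iotaI n m hm i))) => hI.
    by exfalso; apply: h; apply/(cut_iff n m hn hm R y).
  have [i hi] := (existsNP _).2 hI.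
  have hz : \1_(cut_polytope R _ (cycle_edges (m i))) (y \o iotaI n m hm i) = 0 :> R.
    by rewrite indicE memNset.
  by rewrite (bigD1 i) //= hz mul0r mulr0.
rewrite /cut_vol /volume iter_volE ind.
rewrite (@iterf_factor R _ _ P g); last 6 first.
- move=> d; case: (ecase n m hn hm d) => [[e' ->]|[i [e' ->]]].
    by exists None; apply: P0_iota0.
  by exists (Some i); apply: PI_iotaI.
- move=> d [i|] [j|] //=.
  + by move=> hi hj; congr Some; move: hi hj; apply: PI_uniq.
  + by move=> hi hj; exfalso; move: hj hi; apply: P0_PI.
  + by move=> hi hj; exfalso; move: hi hj; apply: P0_PI.
- move=> [i|] x y /= hxy; congr (\1_ _ _); apply/funext => e' /=; apply: hxy.
    exact: PI_iotaI.
  exact: P0_iota0.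
- move=> [i|] x /=; rewrite indicE; case: (_ \in _); by rewrite ?ler01 ?lexx.
- move=> [i|] x d /= /existsP[e' /eqP <-]; rewrite /out01 => o; rewrite indicE memNset //.
    move=> /cut_polytope01 /(_ e') /= /andP[a b]; move: o; rewrite ltNge a /= ltNge b.
    by [].
  move=> /cut_polytope01 /(_ e') /= /andP[a b]; move: o; rewrite ltNge a /= ltNge b.
  by [].
- exact: enum_uniq.
rewrite (@big_option_ord _ _ _ _ i0) /=; congr (_ * _)%E.
  exact: (@factor_block R _ _ hn _ (iota0_inj n m hn hm)).
apply: eq_bigr => i _.
exact: (@factor_block R _ _ (hm i) _ (iotaI_inj n m hm i)).
Qed.

Theorem proposition7 (R : realType) (n : nat) (m : 'I_n -> nat) :
  (3 <= n)%N -> (forall i, 3 <= m i)%N ->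
  cut_vol R _ (necklace_edges m) =
    (cut_vol R _ (cycle_edges n) * \prod_(i < n) cut_vol R _ (cycle_edges (m i)))%E.
Proof. exact: neck_vol. Qed.
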